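(* Consider any instance of the budgeted matching-market pricing problem (defined in the context) in which every buyer $i$ satisfies $b_i\ge v_i$, and let $\langle\mathbf{X},\mathbf{p}\rangle$ be the outcome obtained by Algorithm 1 (described in the context). If $X_i\neq\emptyset$, then buyer $i$ obtains all the items of $X_i$ at a unique price per item, $\bar p_i=p_i/|X_i|$.
   Context: Instance: a finite set $I$ of $n$ buyers and a finite set $J$ of $m$ distinct items. Each buyer $i$ has a preference set $S_i\subseteq J$, a value $v_i>0$ for each item of $S_i$ (value $0$ for items outside $S_i$), and a budget $b_i\ge 0$. An outcome $\langle\mathbf{X},\mathbf{p}\rangle$ consists of pairwise disjoint bundles $X_i\subseteq J$ and payments $p_i\ge 0$. Algorithm 1 (ascending price auction). Throughout, $b_i$ denotes buyer $i$'s remaining budget (initially her budget, decreased by each payment), $J$ denotes the set of currently unsold items, and $\epsilon>0$ is an arbitrarily small price increment. For a price $p>0$, the demand of buyer $i$ is $D_i(p)=\min\{\lfloor b_i/p\rfloor,|S_i|\}$ if $p\le v_i$ and $D_i(p)=0$ if $p>v_i$. Let $A^p=\{i: v_i>p, D_i(p)>0\}$, $Q^p=\{i: v_i=p, D_i(p)>0\}$, $I^p=A^p\cup Q^p$. $G^p$ is the bipartite graph on $I^p\cup J$ with an edge $(i,j)$ iff $j\in S_i$, and $\bar G^p$ is its subgraph on $A^p\cup J$. A $B$-matching of $G^p$ (or $\bar G^p$) is a set of its edges in which every buyer $i$ lies in at most $D_i(p)$ edges and every item in at most one edge; $\mathcal{M}(G^p)$ denotes a maximum one. Given a $B$-matching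 $\mathcal{M}$, an augmenting path from buyer $i$ to item $j$ is a sequence $i=y_1,z_1,y_2,z_2,\dots,y_h,z_h=j$ of buyers $y_k$ and items $z_k$ with $z_k\in S_{y_k}$, $(y_k,z_k)\notin\mathcal{M}$ for all $k$, and $(z_k,y_{k+1})\in\mathcal{M}$ for $k<h$. ''Giving item $j$ to buyer $i$ at price $q$'' means: remove $j$ from $J$, add $j$ to $X_i$, increase $p_i$ by $q$ and decrease $b_i$ by $q$. Start with $p=0$, $X_i=\emptyset$, $p_i=0$. While a maximum $B$-matching of $G^p$ is nonempty: increase $p$ until $|\mathcal{M}(G^p)|>|\mathcal{M}(G^{p+\epsilon})|$ (a critical price). If $|\mathcal{M}(G^p)|>|\mathcal{M}(\bar G^p)|$, run Procedure I: let $J_Q=\bigcup_{i\in Q^p}S_i$; compute a maximum $B$-matching $\mathcal{M}$ of $\bar G^p$ that matches the minimum number of items of $J_Q$; let $\bar J$ be the items of $J$ unmatched in $\mathcal{M}$ and $N(\bar J)$ the buyers having an augmenting path w.r.t. $\mathcal{M}$ to some item of $\bar J$; give each item $j$ with $(i,j)\in\mathcal{M}$, $i\in N(\bar J)$, to $i$ at price $p$; and assign the items of $\bar J$ to buyers in $Q^p$ (respecting supply and budget constraints), each at price $p$. Otherwise run Procedure II: compute a maximum $B$-matching $\mathcal{M}$ of $G^{p+\epsilon}$; let $\bar J$ be the items unmatched in it and $N(\bar J)$ the buyers having an augmenting path to an item of $\bar J$; give each item $j$ with $(i,j)\in\mathcal{M}$, $i\in N(\bar J)$, to $i$ at price $p+\epsilon$;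 remove $\bar J$ from $J$; and remove all items no longer demanded by any buyer. *)

(* Defs.v *)
From HB Require Import structures.
From mathcomp Require Import all_boot all_order all_algebra.
From mathcomp Require Import reals.
Set Implicit Arguments. Unset Strict Implicit. Unset Printing Implicit Defensive.
Import Order.TTheory GRing.Theory Num.Theory.
Local Open Scope ring_scope.

(* Buyers: finite type I; items: finite type J.  S i = preference set,
   v i = value per item of S i, budgets given as I -> R.
   The algorithm is nondeterministic (choice of maximum B-matchings etc.);
   an outcome is the final state of ANY complete run. *)

Section Auction.
Variable R : realType.
Variables I J : finType.
Variable S : I -> {set J}.
Variable v : I -> R.

(* demand D_i(p) with remaining budget b; for p <= 0 (only p = 0 occurs)
   floor(b/p) is +infinity, so the demand is |S_i|. *)
Definition demand (b p : R) (i : I) : nat :=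
  if p <= 0 then #|S i|
  else if p <= v i then minn (Num.truncn (b / p)) #|S i| else 0%N.

Definition Aset (bud : I -> R) (p : R) : {set I} :=
  [set i | (p < v i) && (0 < demand (bud i) p i)%N].
Definition Qset (bud : I -> R) (p : R) : {set I} :=
  [set i | (v i == p) && (0 < demand (bud i) p i)%N].
Definition Iset (bud : I -> R) (p : R) : {set I} := Aset bud p :|: Qset bud p.
Definition caps (bud : I -> R) (p : R) : I -> nat := fun i => demand (bud i) p i.

Definition is_bmatch (A : {set I}) (cap : I -> nat) (U : {set J})
    (M : {set I * J}) : bool :=
  [&& [forall e in M, [&& e.1 \in A, e.2 \in U & e.2 \in S e.1]],
      [forall i, #|[set e in M | e.1 == i]| <= cap i]%N &
      [forall j, #|[set e in M | e.2 == j]| <= 1]%N].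

Definition is_max_bmatch A cap U M : bool :=
  is_bmatch A cap U M &&
  [forall M' : {set I * J}, is_bmatch A cap U M' ==> (#|M'| <= #|M|)%N].

Definition msize A cap U : nat :=
  \max_(M : {set I * J} | is_bmatch A cap U M) #|M|.

Definition matched (M : {set I * J}) : {set J} := [set e.2 | e in M].

(* augmenting path i = y1, z1, ..., yh, zh = j in the graph (A,U):
   (y_k,z_k) are graph edges not in M, (y_{k+1}, z_k) \in M *)
Definition augpath (A : {set I}) (U : {set J}) (M : {set I * J}) (i : I) (j : J) : Prop :=
  exists (e0 : I * J) (P : seq (I * J)),
    [/\ e0.1 = i, (last e0 P).2 = j,
        all (fun e => [&& e.1 \in A, e.2 \in U, e.2 \in S e.1 & e \notin M]) (e0 :: P)
      & path (fun e f => (f.1, e.2) \in M) e0 P].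

Record state := State {
  st_p : R;
  st_bud : I -> R;
  st_U : {set J};        (* currently unsold items *)
  st_X : I -> {set J};
  st_pay : I -> R;
  st_pr : J -> R         (* price at which each sold item was given *)
}.

Definition sell (s : state) (q : R) (T : {set I * J}) (r : R) : state :=
  State q
    (fun i => st_bud s i - r * #|[set j | (i, j) \in T]|%:R)
    (st_U s :\: matched T)
    (fun i => st_X s i :|: [set j | (i, j) \in T])
    (fun i => st_pay s i + r * #|[set j | (i, j) \in T]|%:R)
    (fun j => if j \in matched T then r else st_pr s j).

Definition remove_items (s : state) (Rm : {set J}) : state :=
  State (st_p s) (st_bud s) (st_U s :\: Rm) (st_X s) (st_pay s) (st_pr s).

Variable eps : R.

Definition msizeG (s : state) (p : R) : nat :=
  msize (Iset (st_bud s) p) (caps (st_bud s) p) (st_U s).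
Definition msizeGbar (s : state) (p : R) : nat :=
  msize (Aset (st_bud s) p) (caps (st_bud s) p) (st_U s).

Definition critical (s : state) (p : R) : bool := (msizeG s (p + eps) < msizeG s p)%N.

Definition procI (s : state) (q : R) (s' : state) : Prop :=
  exists (M MQ : {set I * J}) (N : {set I}),
    [/\ is_max_bmatch (Aset (st_bud s) q) (caps (st_bud s) q) (st_U s) M,
        (forall M', is_max_bmatch (Aset (st_bud s) q) (caps (st_bud s) q) (st_U s) M' ->
           (#|matched M :&: \bigcup_(i in Qset (st_bud s) q) S i|
             <= #|matched M' :&: \bigcup_(i in Qset (st_bud s) q) S i|)%N),
        (forall i, i \in N <-> (i \in Aset (st_bud s) q /\
           exists2 j, j \in st_U s :\: matched M &
             augpath (Aset (st_bud s) q) (st_U s) M i j)),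
        is_max_bmatch (Qset (st_bud s) q) (caps (st_bud s) q) (st_U s :\: matched M) MQ
      & s' = sell s q ([set e in M | e.1 \in N] :|: MQ) q].

Definition procII (s : state) (q : R) (s' : state) : Prop :=
  exists (M : {set I * J}) (N : {set I}),
    [/\ is_max_bmatch (Iset (st_bud s) (q + eps)) (caps (st_bud s) (q + eps)) (st_U s) M,
        (forall i, i \in N <-> (i \in Iset (st_bud s) (q + eps) /\
           exists2 j, j \in st_U s :\: matched M &
             augpath (Iset (st_bud s) (q + eps)) (st_U s) M i j))
      & s' = let s1 := sell s q [set e in M | e.1 \in N] (q + eps) in
             remove_items s1
               ((st_U s :\: matched M) :|:
                [set j in st_U s1 | [forall i, (j \in S i) ==>
                                       (demand (st_bud s1 i) (q + eps) i == 0%N)]])].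

Definition step (s s' : state) : Prop :=
  (0 < msizeG s (st_p s))%N /\
  exists k : nat,
    [/\ critical s (st_p s + k%:R * eps),
        (forall k' : nat, (k' < k)%N -> ~~ critical s (st_p s + k'%:R * eps))
      & if (msizeGbar s (st_p s + k%:R * eps) < msizeG s (st_p s + k%:R * eps))%N
        then procI s (st_p s + k%:R * eps) s'
        else procII s (st_p s + k%:R * eps) s'].

Variable b0 : I -> R.

Definition init_state : state :=
  State 0 b0 setT (fun _ => set0) (fun _ => 0) (fun _ => 0).

Inductive reachable : state -> Prop :=
| reach_init : reachable init_state
| reach_step s s' : reachable s -> step s s' -> reachable s'.

Definition alg1_outcome (s : state) : Prop :=
  reachable s /\ msizeG s (st_p s) = 0%N.

End Auction.

(* Main.v *)
Require Import Defs.
From HB Require Import structures.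
From mathcomp Require Import all_boot all_order all_algebra.
From mathcomp Require Import reals.
From mathcomp Require Import zify lra.
Import Order.TTheory GRing.Theory Num.Theory.
Local Open Scope ring_scope.
Local Close Scope ring_scope.
Set Implicit Arguments. Unset Strict Implicit. Unset Printing Implicit Defensive.

Lemma card_setU1_pred (T : finType) (P : pred T) (e : T) (M : {set T}) :
  e \notin M -> #|[set x in e |: M | P x]| = (P e + #|[set x in M | P x]|)%N.
Proof.
move=> eM; case Pe: (P e).
- have -> : [set x in e |: M | P x] = e |: [set x in M | P x].
    by apply/setP=> x; rewrite !inE; case: eqP => [->|] //=; rewrite Pe.
  by rewrite cardsU1 inE (negbTE eM).
- have -> : [set x in e |: M | P x] = [set x in M | P x].
    by apply/setP=> x; rewrite !inE; case: eqP => [->|] //=; rewrite Pe andbF.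
  by [].
Qed.

Lemma card_setD1_pred (T : finType) (P : pred T) (e : T) (M : {set T}) :
  e \in M -> (#|[set x in M :\ e | P x]| + P e = #|[set x in M | P x]|)%N.
Proof.
move=> eM; case Pe: (P e).
- have -> : [set x in M | P x] = e |: [set x in M :\ e | P x].
    by apply/setP=> x; rewrite !inE; case: eqP => [->|] //=; rewrite Pe eM.
  by rewrite cardsU1 !inE eqxx /= addnC.
- have -> : [set x in M :\ e | P x] = [set x in M | P x].
    by apply/setP=> x; rewrite !inE; case: eqP => [->|] //=; rewrite Pe andbF.
  by rewrite addn0.
Qed.

Lemma mem_split (T : eqType) (x : T) (s : seq T) :
  x \in s -> exists s1 s2, s = s1 ++ x :: s2.
Proof. by case/splitPr => s1 s2; exists s1, s2. Qed.

Lemma path_fail (T : Type) (r r' : rel T) (x : T) (s : seq T) :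
  path r x s -> ~~ path r' x s ->
  exists s1 y s2, [/\ s = s1 ++ y :: s2, r (last x s1) y & ~~ r' (last x s1) y].
Proof.
elim: s x => [//|y s IH] x /= /andP[rxy ps].
case r'xy: (r' x y) => /= np.
- have [s1 [z [s2 [-> H1 H2]]]] := IH y ps np.
  by exists (y :: s1), z, s2.
- by exists [::], y, s; rewrite r'xy.
Qed.

Section Match.
Variables I J : finType.
Variable S : I -> {set J}.
Variable A : {set I}.
Variable cap : I -> nat.
Variable U : {set J}.

Lemma bmatchP (M : {set I * J}) : reflect
  [/\ forall e, e \in M -> [&& e.1 \in A, e.2 \in U & e.2 \in S e.1],
      forall i, (#|[set e in M | e.1 == i]| <= cap i)%N &
      forall j, (#|[set e in M | e.2 == j]| <= 1)%N]
  (is_bmatch S A cap U M).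
Proof.
rewrite /is_bmatch; apply: (iffP and3P).
- by case=> /forall_inP H1 /forallP H2 /forallP H3.
- by case=> H1 H2 H3; split; [apply/forall_inP|apply/forallP|apply/forallP].
Qed.

Lemma bm_uniq (M : {set I * J}) x y j : is_bmatch S A cap U M -> (x, j) \in M -> (y, j) \in M -> x = y.
Proof.
case/bmatchP=> _ _ /(_ j) /card_le1_eqP H xM yM.
have := H (x, j) (y, j); rewrite !inE xM yM /= eqxx => /(_ isT isT).
by case.
Qed.

Definition valid (M : {set I * J}) := fun e : I * J => [&& e.1 \in A, e.2 \in U, e.2 \in S e.1 & e \notin M].
Definition link (M : {set I * J}) := fun e f : I * J => (f.1, e.2) \in M.

Lemma bm_add (M : {set I * J}) e : is_bmatch S A cap U M -> e \notin M -> e.1 \in A -> e.2 \in U ->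
  e.2 \in S e.1 -> (#|[set x in M | x.1 == e.1]| < cap e.1)%N -> e.2 \notin matched M ->
  is_bmatch S A cap U (e |: M).
Proof.
case/bmatchP=> H1 H2 H3 eM eA eU eS deg um; apply/bmatchP; split.
- by move=> x /setU1P [->|/H1]; rewrite ?eA ?eU ?eS.
- move=> i; rewrite card_setU1_pred //; case: eqP => [<-|_] /=; first by [].
  exact: H2.
- move=> j; rewrite card_setU1_pred //; case: eqP => [<-|_] /=; last exact: H3.
  suff -> : [set x in M | x.2 == e.2] = set0 by rewrite cards0.
  apply/setP=> x; rewrite !inE; apply/negP => /andP[xM /eqP xe].
  by move: um; rewrite -xe (imset_f (fun e : I * J => e.2) xM).
Qed.

Lemma bm_swap (M : {set I * J}) e0 m : is_bmatch S A cap U M -> e0 \notin M -> m \in M -> m.2 = e0.2 ->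
  m.1 != e0.1 -> e0.1 \in A -> e0.2 \in U -> e0.2 \in S e0.1 ->
  (#|[set x in M | x.1 == e0.1]| < cap e0.1)%N ->
  [/\ is_bmatch S A cap U (e0 |: (M :\ m)),
      #|e0 |: (M :\ m)| = #|M| &
      (#|[set x in e0 |: (M :\ m) | x.1 == m.1]| < cap m.1)%N].
Proof.
case/bmatchP=> H1 H2 H3 e0M mM m2 m1 eA eU eS deg.
have e0M' : e0 \notin M :\ m by rewrite inE negb_and e0M orbT.
split.
- apply/bmatchP; split.
  + by move=> x; rewrite !inE => /orP [/eqP ->|/andP[_ /H1]]; rewrite ?eA ?eU ?eS.
  + move=> i; rewrite card_setU1_pred //.
    case: (eqVneq e0.1 i) => [<-|ne] /=.
    * have := card_setD1_pred (fun x : I * J => x.1 == e0.1) mM => /= E.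
      by move: deg; rewrite -E (negbTE m1) addn0.
    * have := card_setD1_pred (fun x : I * J => x.1 == i) mM => /= E.
      have := H2 i; rewrite -E add0n => /(leq_trans _); apply; apply: leq_addr.
  + move=> j; rewrite card_setU1_pred //.
    have := card_setD1_pred (fun x : I * J => x.2 == j) mM => /= E.
    by have := H3 j; rewrite -E m2 addnC.
- by rewrite cardsU1 e0M' [#|M|](cardsD1 m) mM.
- rewrite card_setU1_pred //.
  have := card_setD1_pred (fun x : I * J => x.1 == m.1) mM => /= E.
  have := H2 m.1; rewrite -E eqxx eq_sym (negbTE m1) add0n addn1.
  by [].
Qed.


Lemma walk_aug n : forall (M : {set I * J}) (e0 : I * J) (P : seq (I * J)),
  (size P < n)%N -> is_bmatch S A cap U M ->
  (#|[set e in M | e.1 == e0.1]| < cap e0.1)%N ->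
  (last e0 P).2 \notin matched M -> all (valid M) (e0 :: P) -> path (link M) e0 P ->
  exists M' : {set I * J}, is_bmatch S A cap U M' /\ (#|M| < #|M'|)%N.
Proof.
elim: n => [//|n IH] M e0 [|f P'] szP bm deg lastu vall pth.
- move: vall => /= /andP[/and4P[eA eU eS eM] _].
  exists (e0 |: M); split; first exact: bm_add.
  by rewrite cardsU1 eM.
- have szP' : (size P' < n)%N by [].
  case: (boolP (e0 \in f :: P')) => [/mem_split [p1 [p2 E]]|e0n].
  + have szp2 : (size p2 < n)%N.
      by move: szP; rewrite E size_cat /=; lia.
    apply: (IH M e0 p2 szp2 bm deg).
    * by move: lastu; rewrite E last_cat.
    * by move: vall; rewrite E /= all_cat /= => /and3P[-> _ /andP[_ ->]].
    * by move: pth; rewrite E cat_path /= => /and3P[_ _ ->].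
  + move: (pth) => /= /andP[lk pth'].
    move: (vall) => /= /andP[/and4P[eA eU eS eM] vall'].
    set m := (f.1, e0.2).
    have mM : m \in M by [].
    have m1 : m.1 != e0.1.
      by apply/eqP => /= E; move: mM; rewrite /m E -surjective_pairing (negbTE eM).
    have [bm1 card1 deg1] := bm_swap bm eM mM erefl m1 eA eU eS deg.
    set M1 := e0 |: (M :\ m) in bm1 card1 deg1.
    case: (boolP (path (link M1) f P')) => [pth1|npth1].
    * have [M' [bm' lt']] : exists M' : {set I * J}, is_bmatch S A cap U M' /\ (#|M1| < #|M'|)%N.
        apply: (IH M1 f P' szP' bm1 deg1).
        - move: lastu => /=; apply: contra => /imsetP [x].
          rewrite /M1 !inE => /orP [/eqP ->|/andP[_ xM]] ->.
          { move: e0n; rewrite inE negb_or => /andP[fe0 _].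
            exact: (imset_f (fun e : I * J => e.2) mM). }
          exact: (imset_f (fun e : I * J => e.2) xM).
        - apply/allP => x xin; have := allP vall x; rewrite inE xin orbT => /(_ isT).
          case/and4P => xA xU xS xM; rewrite /valid xA xU xS /= /M1 !inE negb_or negb_and xM orbT andbT.
          by apply: contraNneq e0n => <-.
        - exact: pth1.
      by exists M'; split => //; rewrite -card1.
    * have [s1 [y [s2 [E r1 r2]]]] := path_fail pth' npth1.
      move: r1 r2; rewrite /link /M1 !inE => r1; rewrite r1 andbT negb_or negbK => /andP[_ /eqP ym].
      have y1 : y.1 = f.1 := congr1 fst ym.
      apply: (IH M e0 (y :: s2) _ bm deg).
      - by move: szP'; rewrite E size_cat /= => H; apply: leq_ltn_trans (leq_addl (size s1) _) H.
      - by move: lastu => /=; rewrite E last_cat.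
      - move: vall => /=; rewrite E all_cat /= => /and3P[-> /andP[_ H] /andP[_ H']].
        by case/andP: H' => -> ->.
      - rewrite /= {1}/link y1; apply/andP; split; first exact: lk.
        by move: pth'; rewrite E cat_path /= => /and3P[_ _ ->].
Qed.

Lemma aug_sat (M : {set I * J}) i j :
  is_max_bmatch S A cap U M -> augpath S A U M i j -> j \in U :\: matched M ->
  cap i = #|[set e in M | e.1 == i]|.
Proof.
case/andP=> bm /forallP mx [e0 [P [e0i lastj allv pth]]] jU.
apply/eqP; rewrite eqn_leq; case/bmatchP: (bm) => _ H2 _; rewrite H2 andbT.
rewrite leqNgt; apply/negP => lt.
have degl : (#|[set e in M | e.1 == e0.1]| < cap e0.1)%N by rewrite e0i.
have lu : (last e0 P).2 \notin matched M by rewrite lastj; case/setDP: jU.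
have [M' [bm' lt']] := @walk_aug (size P).+1 M e0 P (ltnSn _) bm degl lu allv pth.
by have := mx M'; rewrite bm' /= leqNgt lt'.
Qed.

End Match.

Local Open Scope ring_scope.
Set Implicit Arguments. Unset Strict Implicit. Unset Printing Implicit Defensive.

Section Auc.
Variable R : realType.
Variables I J : finType.
Variable S : I -> {set J}.
Variable v : I -> R.
Variable eps : R.

Definition Bset (T : {set I * J}) (i : I) : {set J} := [set j | (i, j) \in T].

Definition dead (s : state R I J) (i : I) (r P0 : R) : Prop :=
  (S i :&: st_U s = set0) \/
  (forall p', P0 <= p' -> p' != r -> demand S v (st_bud s i) p' i = 0%N).

Definition buyer_ok (s : state R I J) (P0 : R) (i : I) : Prop :=
  exists r : R, [/\ forall j, j \in st_X s i -> st_pr s j = r,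
                    st_pay s i = r * #|st_X s i|%:R &
                    (st_X s i != set0 -> dead s i r P0)].

Lemma Bset_matched T i : Bset T i \subset matched T.
Proof. by apply/subsetP => j; rewrite inE => H; exact: (imset_f (fun e : I * J => e.2) H). Qed.

Lemma sell_ok (s s' : state R I J) T r P0 P0' :
  (forall i, st_X s i :&: st_U s = set0) ->
  (forall i, buyer_ok s P0 i) ->
  matched T \subset st_U s ->
  st_U s' \subset st_U s :\: matched T ->
  (forall i, st_X s' i = st_X s i :|: Bset T i) ->
  (forall i, st_pay s' i = st_pay s i + r * #|Bset T i|%:R) ->
  (forall i, st_bud s' i = st_bud s i - r * #|Bset T i|%:R) ->
  (forall j, st_pr s' j = if j \in matched T then r else st_pr s j) ->
  P0 <= r -> P0 <= P0' ->
  (forall i, Bset T i != set0 ->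
     [/\ Bset T i \subset S i, (0 < demand S v (st_bud s i) r i)%N & dead s' i r P0']) ->
  (forall i, st_X s' i :&: st_U s' = set0) /\ (forall i, buyer_ok s' P0' i).
Proof.
move=> disj ok TU U' X' pay' bud' pr' P0r P0P0' HB.
have XnT i j : j \in st_X s i -> j \notin matched T.
  move=> jX; apply: contraT; rewrite negbK => /(subsetP TU) jU.
  by have := disj i; move/setP/(_ j); rewrite !inE jX jU.
have U'U : st_U s' \subset st_U s by apply: subset_trans U' (subsetDl _ _).
split.
- move=> i; apply/setP => j; rewrite in_setI in_set0 X' in_setU.
  case jU': (j \in st_U s'); rewrite ?andbT ?andbF //.
  have := subsetP U' j jU'; rewrite inE => /andP[jnT jU].
  apply/negP => /orP [jX|jB].
  + by have := disj i; move/setP/(_ j); rewrite !inE jX jU.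
  + by move: jnT; rewrite (subsetP (Bset_matched T i) j jB).
- move=> i; have [ri [prX payX deadX]] := ok i.
  case: (eqVneq (Bset T i) set0) => [B0|Bn0].
  + exists ri; rewrite X' B0 setU0 pay' B0 cards0 mulr0 addr0; split => //.
    * by move=> j jX; rewrite pr' (negbTE (XnT i j jX)); apply: prX.
    * move=> /deadX [H|H]; [left|right].
      - apply/eqP; rewrite -subset0 -H; apply: setIS; exact: U'U.
      - by move=> p' le ne; rewrite bud' B0 cards0 mulr0 subr0; apply: H => //; apply: le_trans le.
  + have [BS dpos dead'] := HB i Bn0.
    have rr : st_X s i != set0 -> ri = r.
      move=> /deadX [H|H].
      * have [j jB] := set0Pn _ Bn0.
        have jU : j \in st_U s := subsetP TU j (subsetP (Bset_matched T i) j jB).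
        by move/setP: H => /(_ j); rewrite !inE (subsetP BS j jB) jU.
      * apply/eqP; apply: contraTT dpos; rewrite eq_sym => ne.
        by rewrite H // ltnn.
    have payr : st_pay s i = r * #|st_X s i|%:R.
      case: (eqVneq (st_X s i) set0) => [X0|Xn0]; last by rewrite payX rr.
      by rewrite payX X0 cards0 !mulr0.
    exists r; split.
    * move=> j; rewrite X' in_setU => /orP [jX|jB].
      - rewrite pr' (negbTE (XnT i j jX)) prX // rr //.
        by apply/set0Pn; exists j.
      - by rewrite pr' (subsetP (Bset_matched T i) j jB).
    * rewrite pay' payr X' cardsU.
      have -> : st_X s i :&: Bset T i = set0.
        apply/setP => j; rewrite in_setI in_set0; apply/negP => /andP[jX jB].
        by move: (XnT i j jX); rewrite (subsetP (Bset_matched T i) j jB).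
      by rewrite cards0 subn0 natrD mulrDr.
    * by move=> _.
Qed.

Lemma sat_dead (s' : state R I J) i r bud (B : {set J}) :
  B != set0 -> B \subset S i -> #|B| = demand S v bud r i ->
  st_bud s' i = bud - r * #|B|%:R -> B :&: st_U s' = set0 ->
  dead s' i r r.
Proof.
move=> Bn0 BS cB bud' BU.
have allS : (#|S i| <= #|B|)%N -> dead s' i r r.
  move=> le; left; have /eqP E : B == S i by rewrite eqEcard BS le.
  by rewrite -E.
move: cB; rewrite /demand; case: ifP => r0; first by move=> E; apply: allS; rewrite E.
have r0' : 0 < r by rewrite ltNge r0.
case: ifP => rv; last by move/eqP; rewrite cards_eq0 (negbTE Bn0).
case: (leqP #|S i| (Num.truncn (bud / r))) => H.
  by move=> E; apply: allS; rewrite E.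
move=> cB; right => p' le ne.
have lt : r < p' by rewrite lt_def ne le.
have p0 : 0 < p' by apply: lt_trans lt.
rewrite /demand leNgt p0 /=; case: ifP => // _.
suff -> : Num.truncn (st_bud s' i / p') = 0%N by rewrite min0n.
apply/truncn0Pn; rewrite -ltNge ltr_pdivrMr // mul1r bud' cB.
have := truncnS_gt (bud / r); rewrite ltr_pdivrMr // -natr1.
move: (Num.truncn (bud / r))%:R => t Ht; lra.
Qed.

Lemma val_dead (s' : state R I J) i r : 0 < v i -> v i = r -> dead s' i r r.
Proof.
move=> v0 vr; right => p' le ne.
have lt : r < p' by rewrite lt_def ne le.
have p0 : 0 < p' by rewrite -vr in lt; apply: lt_trans lt.
by rewrite /demand leNgt p0 /= leNgt vr lt.
Qed.

Lemma msize_leU A cap U : (msize S A cap U <= #|U|)%N.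
Proof.
apply/bigmax_leqP => M bm.
have inj : {in M &, injective (fun e : I * J => e.2)}.
  move=> [x j] [y j'] xM yM /= E; subst j'.
  by rewrite (bm_uniq bm xM yM).
rewrite -(card_in_imset inj); apply: subset_leq_card.
apply/subsetP => j /imsetP [e eM ->].
by case/bmatchP: bm => /(_ e eM) /and3P[].
Qed.

Lemma msize_ge A cap U M : is_bmatch S A cap U M -> (#|M| <= msize S A cap U)%N.
Proof. by move=> bm; apply: (leq_bigmax_cond (F := fun M : {set I * J} => #|M|)). Qed.

Lemma card_Bset (M : {set I * J}) i : #|Bset M i| = #|[set e in M | e.1 == i]|.
Proof.
have -> : [set e in M | e.1 == i] = (pair i) @: Bset M i.
  apply/setP => [[x j]]; rewrite !inE /=; apply/andP/imsetP.
  - by case=> xjM /eqP E; subst x; exists j; rewrite // inE.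
  - by case=> j' ; rewrite inE => H [-> ->]; split.
by rewrite card_imset //; move=> x y [].
Qed.

Lemma Iset_pos bud p i : i \in Iset S v bud p -> (0 < demand S v (bud i) p i)%N.
Proof. by rewrite /Iset /Aset /Qset !inE => /orP [/andP[_ ->]|/andP[_ ->]]. Qed.

Lemma Iset_eq bud bud' p i : bud' i = bud i ->
  (i \in Iset S v bud' p) = (i \in Iset S v bud p) /\ caps S v bud' p i = caps S v bud p i.
Proof. by move=> E; rewrite /Iset /Aset /Qset /caps !inE E. Qed.

Definition Inv (s : state R I J) : Prop :=
  [/\ 0 <= st_p s, forall i, st_X s i :&: st_U s = set0 &
      exists P0, (P0 <= st_p s \/ (P0 <= st_p s + eps /\ ~~ critical S v eps s (st_p s))) /\
                 forall i, buyer_ok s P0 i].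

Lemma BU_disj (s : state R I J) q T r i :
  Bset T i :&: st_U (sell s q T r) = set0.
Proof.
apply/setP=> j; rewrite in_setI in_set0 /=; apply/negP => /andP[jB].
by rewrite in_setD (subsetP (Bset_matched T i) _ jB).
Qed.

Lemma procI_inv s s' q P0 : (forall i, 0 < v i) -> 0 <= q -> P0 <= q ->
  (forall i, st_X s i :&: st_U s = set0) -> (forall i, buyer_ok s P0 i) ->
  procI S v s q s' -> Inv s'.
Proof.
move=> v0 q0 P0q disj ok [M [MQ [N [maxM _ Ndef maxMQ ->]]]].
set T := [set e in M | e.1 \in N] :|: MQ.
case/andP: (maxM) => bmM _; case/andP: (maxMQ) => bmMQ _.
case/bmatchP: (bmM) => EM _ _; case/bmatchP: (bmMQ) => EQ _ _.
have TU : matched T \subset st_U s.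
  apply/subsetP => j /imsetP [e]; rewrite !inE => /orP [/andP[eM _]|eQ] ->.
  - by case/and3P: (EM e eM).
  - by case/and3P: (EQ e eQ) => _ /setDP [].
have HB : forall i, Bset T i != set0 ->
     [/\ Bset T i \subset S i, (0 < demand S v (st_bud s i) q i)%N &
         dead (sell s q T q) i q q].
  move=> i Bn0.
  have BS : Bset T i \subset S i.
    apply/subsetP => j; rewrite !inE => /orP [/andP[ijM _]|ijQ].
    - by case/and3P: (EM _ ijM).
    - by case/and3P: (EQ _ ijQ).
  case: (boolP (i \in N)) => iN.
  - have [iA [j jU aug]] := (Ndef i).1 iN.
    have BT : Bset T i = Bset M i.
      apply/setP => j'; rewrite !inE /= iN andbT; apply/orP/idP => [[//|ijQ]|->]; last by left.
      case/and3P: (EQ _ ijQ) => iQ _ _; move: iA iQ; rewrite !inE => /andP[lt _] /andP[/eqP eq _].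
      by move: lt; rewrite eq ltxx.
    have dpos : (0 < demand S v (st_bud s i) q i)%N by move: iA; rewrite inE => /andP[_ ->].
    split => //; apply: (sat_dead (bud := st_bud s i) (B := Bset T i)) => //.
    + by rewrite BT card_Bset -(aug_sat maxM aug jU).
    + exact: BU_disj.
  - have BT : Bset T i = Bset MQ i.
      by apply/setP => j'; rewrite !inE /= (negbTE iN) andbF.
    have [j jB] := set0Pn _ Bn0.
    have ijQ : (i, j) \in MQ by move: jB; rewrite BT inE.
    case/and3P: (EQ _ ijQ) => /=; rewrite inE => /andP[/eqP vq dpos] _ _.
    split => //; exact: (val_dead _ (v0 i) vq).
have [disj' ok'] := sell_ok (s' := sell s q T q) (T := T) (r := q) (P0' := q) disj ok TU
  (subxx _) (fun i => erefl) (fun i => erefl) (fun i => erefl) (fun i => erefl) P0q P0q HB.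
by split => //; exists q; split => //; left.
Qed.

Lemma procII_inv s s' q P0 : 0 < eps -> 0 <= q -> P0 <= q + eps ->
  (forall i, st_X s i :&: st_U s = set0) -> (forall i, buyer_ok s P0 i) ->
  procII S v eps s q s' -> Inv s'.
Proof.
move=> e0 q0 P0q disj ok [M [N [maxM Ndef Es']]].
set T := [set e in M | e.1 \in N] in Es'.
case/andP: (maxM) => bmM _.
case/bmatchP: (bmM) => EM H2 H3.
have Est : st_p s' = q by rewrite Es'.
have U's : st_U s' \subset st_U s :\: matched T by rewrite Es' /=; apply: subsetDl.
have bud' : forall i, st_bud s' i = st_bud s i - (q + eps) * #|Bset T i|%:R by rewrite Es'.
have TU : matched T \subset st_U s.
  apply/subsetP => j /imsetP [e]; rewrite !inE => /andP[eM _] ->.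
  by case/and3P: (EM e eM).
have B0 : forall i, i \notin N -> Bset T i = set0.
  by move=> i iN; apply/setP => j; rewrite !inE /= (negbTE iN) andbF.
have HB : forall i, Bset T i != set0 ->
     [/\ Bset T i \subset S i, (0 < demand S v (st_bud s i) (q + eps) i)%N &
         dead s' i (q + eps) (q + eps)].
  move=> i Bn0.
  have BS : Bset T i \subset S i.
    apply/subsetP => j; rewrite !inE => /andP[ijM _].
    by case/and3P: (EM _ ijM).
  have iN : i \in N by apply: contraR Bn0 => iN; rewrite B0.
  have [iI [j jU aug]] := (Ndef i).1 iN.
  have BT : Bset T i = Bset M i.
    by apply/setP => j'; rewrite !inE /= iN andbT.
  split => //; first exact: Iset_pos.
  apply: (sat_dead (bud := st_bud s i) (B := Bset T i)) => //.
  + by rewrite BT card_Bset -(aug_sat maxM aug jU).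
  + apply/setP=> j'; rewrite in_setI in_set0; apply/negP => /andP[jB /(subsetP U's)].
    by rewrite in_setD (subsetP (Bset_matched T i) _ jB).
have [disj' ok'] := sell_ok (s' := s') (T := T) (r := q + eps) (P0' := q + eps) disj ok TU
  U's (fun i => ltac:(by rewrite Es')) (fun i => ltac:(by rewrite Es')) bud'
  (fun j => ltac:(by rewrite Es')) P0q P0q HB.
split => //; first by rewrite Est.
exists (q + eps); split => //; right; rewrite Est; split => //.
have U'E j : j \in st_U s' = [&& j \in st_U s, j \notin matched T, j \in matched M &
   ~~ [forall i, (j \in S i) ==> (demand S v (st_bud s' i) (q + eps) i == 0%N)]].
  rewrite Es' /= !inE.
  move: [forall i, _] => F.
  by case: (j \in st_U s); case: (j \in matched T); case: (j \in matched M); case: F.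

set M' := [set e in M | e.1 \notin N].
have budE : forall i, i \notin N -> st_bud s' i = st_bud s i.
  by move=> i iN; rewrite bud' B0 // cards0 mulr0 subr0.
have bmM' : is_bmatch S (Iset S v (st_bud s') (q + eps)) (caps S v (st_bud s') (q + eps)) (st_U s') M'.
  apply/bmatchP; split.
  - move=> e; rewrite inE => /andP[eM eN].
    have /and3P[eI eU eS] := EM e eM.
    rewrite (Iset_eq (q + eps) (budE _ eN)).1 eI eS andbT /= U'E eU /=.
    apply/and3P; split.
    + apply/imsetP => [[f]]; rewrite inE => /andP[fM fN] E.
      have fM' : (f.1, e.2) \in M by rewrite E -surjective_pairing.
      have eM' : (e.1, e.2) \in M by rewrite -surjective_pairing.
      by move: fN; rewrite (bm_uniq bmM fM' eM') (negbTE eN).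
    + exact: (imset_f (fun e : I * J => e.2) eM).
    + apply/forallP => /(_ e.1); rewrite eS /= budE // => /eqP E.
      by move: (Iset_pos eI); rewrite E.
  - move=> i; case: (boolP (i \in N)) => iN.
    + suff -> : [set e in M' | e.1 == i] = set0 by rewrite cards0.
      apply/setP => e; rewrite !inE; apply/negP => /andP[/andP[_ eN] /eqP ei].
      by move: eN; rewrite ei iN.
    + rewrite (Iset_eq (q + eps) (budE _ iN)).2; apply: leq_trans (H2 i).
      by apply: subset_leq_card; apply/subsetP => e; rewrite !inE => /andP[/andP[-> _] ->].
  - move=> j; apply: leq_trans (H3 j).
    by apply: subset_leq_card; apply/subsetP => e; rewrite !inE => /andP[/andP[-> _] ->].
have U'M' : st_U s' \subset matched M'.
  apply/subsetP => j; rewrite U'E => /and4P[jU jnT /imsetP [e eM je] _]; subst j.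
  rewrite /matched; apply/imsetP; exists e => //; rewrite /M' inE eM /=.
  apply: contra jnT => eN; rewrite /matched; apply/imsetP; exists e => //; by rewrite /T inE eM eN.
rewrite /critical /msizeG -leqNgt.
apply: leq_trans (msize_leU _ _ _) _.
apply: leq_trans (msize_ge bmM').
apply: leq_trans (subset_leq_card U'M') _.
exact: leq_imset_card.
Qed.

Lemma step_inv s s' : 0 < eps -> (forall i, 0 < v i) -> Inv s -> step S v eps s s' -> Inv s'.
Proof.
move=> e0 v0 [p0 disj [P0 [flag ok]]] [_ [k [crit _ proc]]].
have q0 : 0 <= st_p s + k%:R * eps by rewrite addr_ge0 // mulr_ge0 // ltW.
have P0q : P0 <= st_p s + k%:R * eps.
  case: flag => [H|[H nc]].
  - by apply: le_trans H _; rewrite lerDl mulr_ge0 // ltW.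
  - have k0 : k != 0%N by apply: contraNneq nc => k0; move: crit; rewrite k0 mul0r addr0.
    apply: le_trans H _; rewrite lerD2l.
    have H1 : 1 <= k%:R :> R by rewrite ler1n lt0n.
    move: (k%:R : R) H1 => x H1; nra.
case: ifP proc => _ proc.
- exact: (procI_inv v0 q0 P0q disj ok proc).
- apply: (procII_inv e0 q0 _ disj ok proc).
  by apply: le_trans P0q _; rewrite lerDl ltW.
Qed.

Lemma reach_inv b0 s : 0 < eps -> (forall i, 0 < v i) -> reachable S v eps b0 s -> Inv s.
Proof.
move=> e0 v0; elim => [|s1 s2 _ IH st]; last exact: step_inv st.
split => //=.
- by move=> i; rewrite set0I.
- exists 0; split; first by left.
  move=> i; exists 0; split; [by move=> j; rewrite inE | by rewrite mul0r | by rewrite /= eqxx].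
Qed.

End Auc.


Unset Implicit Arguments.
Set Strict Implicit.
Set Printing Implicit Defensive.

Theorem lemma5 (R : realType) (I J : finType) (S : I -> {set J}) (v b : I -> R) :
  (forall i, 0 < v i) -> (forall i, 0 <= b i) -> (forall i, v i <= b i) ->
  exists2 eps0 : R, 0 < eps0 &
    forall eps : R, 0 < eps -> eps < eps0 ->
    forall s : state R I J, alg1_outcome S v eps b s ->
    forall i : I, st_X s i != set0 ->
      exists pbar : R,
        (forall j, j \in st_X s i -> st_pr s j = pbar) /\
        pbar = st_pay s i / #|st_X s i|%:R.
Proof.
move=> v0 _ _; exists 1; first exact: ltr01.
move=> eps e0 _ s [rs _] i Xn0.
have [_ _ [P0 [_ ok]]] := reach_inv e0 v0 rs.
have [r [prX payX _]] := ok i.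
exists r; split => //.
by rewrite payX mulfK // pnatr_eq0 cards_eq0.
Qed.
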